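(* Let $\mathcal C$ be a hyper-extensive category and $H\colon\mathcal C\to\mathcal C$ a functor preserving countable coproducts and having a terminal coalgebra. Then $H$ is a cia functor: every corecursive $H$-algebra is a cia. Hence the category of corecursive $H$-algebras coincides with the category of cias for $H$ (both as full subcategories of the category of $H$-algebras).
   Context: Hyper-extensive category: countable coproducts that are universal (pullbacks along arbitrary morphisms exist and preserve them), disjoint (injections monic, pairwise pullbacks initial), and coherent (a countable family of pairwise disjoint coproduct injections into $A$ has copairing a coproduct injection). An $H$-algebra $a\colon HA\to A$ is corecursive if for every coalgebra $e\colon X\to HX$ there is a unique $s\colon X\to A$ with $s=a\cdot Hs\cdot e$. It is a cia if for every $e\colon X\to HX+A$ there is a unique $s\colon X\to A$ with $s=[a,\mathrm{id}_A]\cdot(Hs+\mathrm{id}_A)\cdot e$. A functor is a cia functor if every corecursive algebra for it is a cia. *)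

(* Defs.v *)
Record Category := {
  Obj :> Type;
  Hom : Obj -> Obj -> Type;
  idm : forall A : Obj, Hom A A;
  comp : forall {A B C : Obj}, Hom B C -> Hom A B -> Hom A C;
  comp_assoc : forall (A B C D : Obj) (h : Hom C D) (g : Hom B C) (f : Hom A B),
      comp h (comp g f) = comp (comp h g) f;
  comp_id_l : forall (A B : Obj) (f : Hom A B), comp (idm B) f = f;
  comp_id_r : forall (A B : Obj) (f : Hom A B), comp f (idm A) = f
}.

Arguments Hom {C} : rename.
Arguments idm {C} : rename.
Arguments comp {C} {A B C0} : rename.

Record Functor (C : Category) := {
  Fobj :> C -> C;
  Fmor : forall {A B : C}, Hom A B -> Hom (Fobj A) (Fobj B);
  Fmor_id : forall A : C, Fmor (idm A) = idm (Fobj A);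
  Fmor_comp : forall (A B D : C) (g : Hom B D) (f : Hom A B),
      Fmor (comp g f) = comp (Fmor g) (Fmor f)
}.

Arguments Fobj {C}.
Arguments Fmor {C} f {A B} : rename.

Section CatDefs.
Variable C : Category.

Definition countable (I : Type) : Prop :=
  exists f : I -> nat, forall i j, f i = f j -> i = j.

Definition is_initial (O : C) : Prop :=
  forall X : C, exists! h : Hom O X, True.

Definition monic {A B : C} (m : Hom A B) : Prop :=
  forall (X : C) (f g : Hom X A), comp m f = comp m g -> f = g.

Definition is_coproduct {I : Type} (A : I -> C) (S : C)
    (inj : forall i, Hom (A i) S) : Prop :=
  forall (X : C) (f : forall i, Hom (A i) X),
    exists! h : Hom S X, forall i, comp h (inj i) = f i.

Definition is_bincoproduct (B1 B2 S : C) (m1 : Hom B1 S) (m2 : Hom B2 S) : Prop :=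
  forall (X : C) (f1 : Hom B1 X) (f2 : Hom B2 X),
    exists! h : Hom S X, comp h m1 = f1 /\ comp h m2 = f2.

Definition is_pullback {X Y Z : C} (f : Hom X Z) (g : Hom Y Z)
    (P : C) (p1 : Hom P X) (p2 : Hom P Y) : Prop :=
  comp f p1 = comp g p2 /\
  forall (Q : C) (q1 : Hom Q X) (q2 : Hom Q Y), comp f q1 = comp g q2 ->
    exists! u : Hom Q P, comp p1 u = q1 /\ comp p2 u = q2.

Definition coproduct_injection {B A : C} (m : Hom B A) : Prop :=
  exists (B' : C) (m' : Hom B' A), is_bincoproduct B B' A m m'.

Definition disjoint_maps {B1 B2 A : C} (m1 : Hom B1 A) (m2 : Hom B2 A) : Prop :=
  exists (P : C) (p1 : Hom P B1) (p2 : Hom P B2),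
    is_pullback m1 m2 P p1 p2 /\ is_initial P.

Definition has_countable_coproducts : Prop :=
  forall (I : Type), countable I -> forall A : I -> C,
    exists (S : C) (inj : forall i, Hom (A i) S), is_coproduct A S inj.

Definition universal_coproducts : Prop :=
  forall (I : Type), countable I -> forall (A : I -> C) (S : C)
    (inj : forall i, Hom (A i) S), is_coproduct A S inj ->
  forall (D : C) (g : Hom D S),
    (forall i, exists (P : C) (r : Hom P (A i)) (q : Hom P D),
        is_pullback (inj i) g P r q) /\
    (forall (P : I -> C) (r : forall i, Hom (P i) (A i)) (q : forall i, Hom (P i) D),
        (forall i, is_pullback (inj i) g (P i) (r i) (q i)) ->
        is_coproduct P D q).

Definition disjoint_coproducts : Prop :=
  forall (I : Type), countable I -> forall (A : I -> C) (S : C)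
    (inj : forall i, Hom (A i) S), is_coproduct A S inj ->
    (forall i, monic (inj i)) /\
    (forall i j, i <> j -> disjoint_maps (inj i) (inj j)).

Definition coherent_coproducts : Prop :=
  forall (I : Type), countable I -> forall (B : I -> C) (A : C)
    (m : forall i, Hom (B i) A),
    (forall i, coproduct_injection (m i)) ->
    (forall i j, i <> j -> disjoint_maps (m i) (m j)) ->
    forall (S : C) (sigma : forall i, Hom (B i) S), is_coproduct B S sigma ->
    forall h : Hom S A, (forall i, comp h (sigma i) = m i) ->
      coproduct_injection h.

Definition hyper_extensive : Prop :=
  has_countable_coproducts /\ universal_coproducts /\
  disjoint_coproducts /\ coherent_coproducts.

Variable H : Functor C.

Definition preserves_countable_coproducts : Prop :=
  forall (I : Type), countable I -> forall (A : I -> C) (S : C)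
    (inj : forall i, Hom (A i) S), is_coproduct A S inj ->
    is_coproduct (fun i => H (A i)) (H S) (fun i => Fmor H (inj i)).

Definition is_terminal_coalgebra (T : C) (t : Hom T (H T)) : Prop :=
  forall (X : C) (e : Hom X (H X)),
    exists! s : Hom X T, comp t s = comp (Fmor H s) e.

Definition has_terminal_coalgebra : Prop :=
  exists (T : C) (t : Hom T (H T)), is_terminal_coalgebra T t.

Definition corecursive {A : C} (a : Hom (H A) A) : Prop :=
  forall (X : C) (e : Hom X (H X)),
    exists! s : Hom X A, s = comp a (comp (Fmor H s) e).

(* completely iterative algebra: for every binary coproduct HX + A (with
   injections in1, in2) and every e : X -> HX + A there is a unique s with
   s = [a, id] . (Hs + id) . e ; here k = [a, id] . (Hs + id) is the unique
   map with k . in1 = a . Hs and k . in2 = id. *)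
Definition cia {A : C} (a : Hom (H A) A) : Prop :=
  forall (X S : C) (in1 : Hom (H X) S) (in2 : Hom A S),
    is_bincoproduct (H X) A S in1 in2 ->
  forall e : Hom X S,
    exists! s : Hom X A,
      exists k : Hom S A,
        comp k in1 = comp a (Fmor H s) /\ comp k in2 = idm A /\ s = comp k e.

Definition cia_functor : Prop :=
  forall (A : C) (a : Hom (H A) A), corecursive a -> cia a.

End CatDefs.

Arguments corecursive {C} H {A}.
Arguments cia {C} H {A}.

(* Main.v *)
Require Import Defs.
From Stdlib Require Import IndefiniteDescription.

Section Gen.
Variable C : Category.
Local Notation "g ∘ f" := (comp g f) (at level 40, left associativity).

Lemma initial_unique (O : C) : is_initial C O -> forall X (f g : Hom O X), f = g.
Proof. intros HO X f g. destruct (HO X) as [h [_ Hh]].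
  transitivity h; [symmetry|]; apply Hh; exact I. Qed.

Lemma cop_ext {I} (A : I -> C) S inj : is_coproduct C A S inj ->
  forall X (h1 h2 : Hom S X), (forall i, h1 ∘ inj i = h2 ∘ inj i) -> h1 = h2.
Proof. intros Hc X h1 h2 E. destruct (Hc X (fun i => h2 ∘ inj i)) as [h [_ Hu]].
  transitivity h; [symmetry|]; apply Hu; auto. Qed.

Lemma bin_ext B1 B2 S (m1 : Hom B1 S) (m2 : Hom B2 S) : is_bincoproduct C B1 B2 S m1 m2 ->
  forall X (h1 h2 : Hom S X), h1 ∘ m1 = h2 ∘ m1 -> h1 ∘ m2 = h2 ∘ m2 -> h1 = h2.
Proof. intros Hc X h1 h2 E1 E2. destruct (Hc X (h2 ∘ m1) (h2 ∘ m2)) as [h [_ Hu]].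
  transitivity h; [symmetry|]; apply Hu; auto. Qed.

Lemma bin_swap B1 B2 S (m1 : Hom B1 S) (m2 : Hom B2 S) : is_bincoproduct C B1 B2 S m1 m2 ->
  is_bincoproduct C B2 B1 S m2 m1.
Proof. intros Hc X f1 f2. destruct (Hc X f2 f1) as [h [[E1 E2] Hu]].
  exists h. split; [tauto|]. intros h' [E1' E2']. apply Hu; tauto. Qed.

Definition bfam (B1 B2 : C) (b : bool) : C := if b then B1 else B2.
Definition binj {B1 B2 S : C} (m1 : Hom B1 S) (m2 : Hom B2 S) : forall b, Hom (bfam B1 B2 b) S :=
  fun b => match b as b return Hom (bfam B1 B2 b) S with true => m1 | false => m2 end.

Lemma bin_fam B1 B2 S (m1 : Hom B1 S) (m2 : Hom B2 S) : is_bincoproduct C B1 B2 S m1 m2 ->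
  is_coproduct C (bfam B1 B2) S (binj m1 m2).
Proof. intros Hc X f. destruct (Hc X (f true) (f false)) as [h [[E1 E2] Hu]].
  exists h. split. intros [|]; assumption. intros h' E. apply Hu. split; [exact (E true)|exact (E false)]. Qed.

Lemma fam_bin (F : bool -> C) S (inj : forall b, Hom (F b) S) : is_coproduct C F S inj ->
  is_bincoproduct C (F true) (F false) S (inj true) (inj false).
Proof. intros Hc X f1 f2.
  destruct (Hc X (fun b => match b as b return Hom (F b) X with true => f1 | false => f2 end)) as [h [E Hu]].
  exists h. split. split; [exact (E true)|exact (E false)].
  intros h' [E1 E2]. apply Hu. intros [|]; assumption. Qed.

Lemma countable_bool : countable bool.
Proof. exists (fun b : bool => if b then 0 else 1). intros [|] [|]; simpl; congruence. Qed.
Lemma countable_nat : countable nat.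
Proof. exists (fun n => n). auto. Qed.
Lemma countable_empty : countable Empty_set.
Proof. exists (fun i : Empty_set => match i with end). intros []. Qed.

Lemma bin_exists (HCC : has_countable_coproducts C) (B1 B2 : C) :
  exists S m1 m2, is_bincoproduct C B1 B2 S m1 m2.
Proof. destruct (HCC bool countable_bool (bfam B1 B2)) as [S [inj Hc]].
  exists S, (inj true), (inj false). exact (fam_bin _ _ _ Hc). Qed.

Lemma strict_init (HU : universal_coproducts C) D S (g : Hom D S) :
  is_initial C S -> is_initial C D.
Proof. intros HS.
  set (E := fun i : Empty_set => match i return C with end).
  assert (Hc : is_coproduct C E S (fun i => match i with end)).
  { intros X f. destruct (HS X) as [h [_ Hu]]. exists h. split. intros [].
    intros h' _. apply Hu. exact I. }
  destruct (HU Empty_set countable_empty E S _ Hc D g) as [_ H2].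
  assert (Hd := H2 E (fun i => match i with end) (fun i => match i with end) (fun i => match i with end)).
  intros X. destruct (Hd X (fun i => match i with end)) as [h [_ Hu]].
  exists h. split. exact I. intros h' _. apply Hu. intros []. Qed.

Lemma cop_initial {J} (P : J -> C) D q : is_coproduct C P D q ->
  (forall i, is_initial C (P i)) -> is_initial C D.
Proof. intros Hc HI X.
  destruct (Hc X (fun i => proj1_sig (constructive_indefinite_description _ (HI i X)))) as [h [_ _]].
  exists h. split. exact I. intros h' _. apply (cop_ext _ _ _ Hc). intros i.
  apply (initial_unique _ (HI i)). Qed.

Lemma disjoint_bin (HU : universal_coproducts C) (HD : disjoint_coproducts C)
  B1 B2 S (m1 : Hom B1 S) (m2 : Hom B2 S) : is_bincoproduct C B1 B2 S m1 m2 ->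
  forall Q (f : Hom Q B1) (g : Hom Q B2), m1 ∘ f = m2 ∘ g -> is_initial C Q.
Proof. intros Hb Q f g E.
  destruct (HD bool countable_bool _ _ _ (bin_fam _ _ _ _ _ Hb)) as [_ Hd].
  destruct (Hd true false ltac:(discriminate)) as [P [p1 [p2 [[_ Hpb] HP]]]].
  destruct (Hpb Q f g E) as [u _]. exact (strict_init HU _ _ u HP). Qed.

Lemma monic_bin1 (HD : disjoint_coproducts C)
  B1 B2 S (m1 : Hom B1 S) (m2 : Hom B2 S) : is_bincoproduct C B1 B2 S m1 m2 -> monic C m1.
Proof. intros Hb. destruct (HD bool countable_bool _ _ _ (bin_fam _ _ _ _ _ Hb)) as [Hm _].
  exact (Hm true). Qed.

Lemma pb_bin (HU : universal_coproducts C)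
  B1 B2 S (m1 : Hom B1 S) (m2 : Hom B2 S) : is_bincoproduct C B1 B2 S m1 m2 ->
  forall D (g : Hom D S), exists P1 P2 (r1 : Hom P1 B1) (r2 : Hom P2 B2) q1 q2,
    is_pullback C m1 g P1 r1 q1 /\ is_pullback C m2 g P2 r2 q2 /\ is_bincoproduct C P1 P2 D q1 q2.
Proof. intros Hb D g.
  destruct (HU bool countable_bool _ _ _ (bin_fam _ _ _ _ _ Hb) D g) as [H1 H2].
  destruct (H1 true) as [P1 [r1 [q1 Hp1]]]. destruct (H1 false) as [P2 [r2 [q2 Hp2]]].
  exists P1, P2, r1, r2, q1, q2. split; [exact Hp1|]. split; [exact Hp2|].
  assert (Hc := H2 (bfam P1 P2)
    (fun b => match b as b return Hom (bfam P1 P2 b) (bfam B1 B2 b) with true => r1 | false => r2 end)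
    (binj q1 q2) ltac:(intros [|]; assumption)).
  exact (fam_bin _ _ _ Hc). Qed.

Lemma pb_fam (HU : universal_coproducts C) {I} (HI : countable I) (A : I -> C) S inj :
  is_coproduct C A S inj -> forall D (g : Hom D S),
  exists (P : I -> C) (r : forall i, Hom (P i) (A i)) (q : forall i, Hom (P i) D),
    (forall i, is_pullback C (inj i) g (P i) (r i) (q i)) /\ is_coproduct C P D q.
Proof. intros Hc D g. destruct (HU I HI A S inj Hc D g) as [H1 H2].
  assert (Ht : forall i, exists t : {P : C & (Hom P (A i) * Hom P D)%type},
     is_pullback C (inj i) g (projT1 t) (fst (projT2 t)) (snd (projT2 t))).
  { intros i. destruct (H1 i) as [P [r [q Hp]]]. exists (existT _ P (r, q)). exact Hp. }
  set (t := fun i => proj1_sig (constructive_indefinite_description _ (Ht i))).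
  exists (fun i => projT1 (t i)), (fun i => fst (projT2 (t i))), (fun i => snd (projT2 (t i))).
  assert (Hp : forall i, is_pullback C (inj i) g (projT1 (t i)) (fst (projT2 (t i))) (snd (projT2 (t i)))).
  { intros i. exact (proj2_sig (constructive_indefinite_description _ (Ht i))). }
  split; [exact Hp|]. exact (H2 _ _ _ Hp). Qed.

Lemma iso_of_init P1 P2 D (q1 : Hom P1 D) (q2 : Hom P2 D) :
  is_bincoproduct C P1 P2 D q1 q2 -> is_initial C P1 -> exists u : Hom D P2, q2 ∘ u = idm D.
Proof. intros Hb HI. destruct (HI P2) as [z _].
  destruct (Hb P2 z (idm P2)) as [u [[E1 E2] _]]. exists u.
  apply (bin_ext _ _ _ _ _ Hb).
  - apply (initial_unique _ HI).
  - rewrite <- comp_assoc, E2, comp_id_l, comp_id_r. reflexivity. Qed.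

Lemma compose_inj (HCC : has_countable_coproducts C) B B' S (m : Hom B S) (m' : Hom B' S)
  Cc Cc' (n : Hom Cc B) (n' : Hom Cc' B) :
  is_bincoproduct C B B' S m m' -> is_bincoproduct C Cc Cc' B n n' ->
  exists Q c, is_bincoproduct C Cc Q S (m ∘ n) c.
Proof. intros Hb1 Hb2. destruct (bin_exists HCC Cc' B') as [Q [k1 [k2 Hk]]].
  destruct (Hk S (m ∘ n') m') as [c [[Ec1 Ec2] _]].
  exists Q, c. intros X f1 f2.
  destruct (Hb2 X f1 (f2 ∘ k1)) as [g [[Eg1 Eg2] Hgu]].
  destruct (Hb1 X g (f2 ∘ k2)) as [h [[Eh1 Eh2] Hhu]].
  exists h. split. split.
  - rewrite comp_assoc, Eh1. exact Eg1.
  - apply (bin_ext _ _ _ _ _ Hk).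
    + rewrite <- comp_assoc, Ec1, comp_assoc, Eh1. exact Eg2.
    + rewrite <- comp_assoc, Ec2. exact Eh2.
  - intros h' [E1 E2]. apply Hhu. split.
    + symmetry. apply Hgu. split.
      * rewrite <- comp_assoc. exact E1.
      * rewrite <- comp_assoc, <- Ec1, comp_assoc, E2. reflexivity.
    + rewrite <- Ec2, comp_assoc, E2. reflexivity. Qed.

Lemma factor_compl (HU : universal_coproducts C) (HD : disjoint_coproducts C)
  W Wc X (w : Hom W X) (c : Hom Wc X) : is_bincoproduct C W Wc X w c ->
  forall B (m : Hom B X), (forall Q (f : Hom Q B) (g : Hom Q W), m ∘ f = w ∘ g -> is_initial C Q) ->
  exists t, m = c ∘ t.
Proof. intros Hb B m Hd.
  destruct (pb_bin HU _ _ _ _ _ Hb B m) as [P1 [P2 [r1 [r2 [q1 [q2 [[E1 _] [[E2 _] Hb2]]]]]]]].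
  assert (HI : is_initial C P1) by (apply (Hd _ q1 r1); symmetry; exact E1).
  destruct (iso_of_init _ _ _ _ _ Hb2 HI) as [u Hu].
  exists (r2 ∘ u). rewrite comp_assoc, E2, <- comp_assoc, Hu, comp_id_r. reflexivity. Qed.

Lemma pres_bin (H : Functor C) (HP : preserves_countable_coproducts C H)
  B1 B2 S (m1 : Hom B1 S) (m2 : Hom B2 S) : is_bincoproduct C B1 B2 S m1 m2 ->
  is_bincoproduct C (H B1) (H B2) (H S) (Fmor H m1) (Fmor H m2).
Proof. intros Hb. exact (fam_bin _ _ _ (HP bool countable_bool _ _ _ (bin_fam _ _ _ _ _ Hb))). Qed.

End Gen.

Section Main.
Variable C : Category.
Local Notation "g ∘ f" := (comp g f) (at level 40, left associativity).
Variable H : Functor C.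
Hypothesis HCC : has_countable_coproducts C.
Hypothesis HU : universal_coproducts C.
Hypothesis HD : disjoint_coproducts C.
Hypothesis HK : coherent_coproducts C.
Hypothesis HP : preserves_countable_coproducts C H.
Variables (A : C) (a : Hom (H A) A) (X So : C) (in1 : Hom (H X) So) (in2 : Hom A So).
Hypothesis Hbin : is_bincoproduct C (H X) A So in1 in2.
Variable e : Hom X So.
Variables (XH W0 : C) (fH : Hom XH (H X)) (eps0 : Hom W0 A) (xH : Hom XH X) (w0 : Hom W0 X).
Hypothesis pbH : is_pullback C in1 e XH fH xH.
Hypothesis pb0 : is_pullback C in2 e W0 eps0 w0.
Hypothesis binX : is_bincoproduct C XH W0 X xH w0.

Record stage := { Wo : C; wm : Hom Wo X; Wc : C; wc : Hom Wc X;
  wbin : is_bincoproduct C Wo Wc X wm wc }.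

Definition stage0 : stage :=
  {| Wo := W0; wm := w0; Wc := XH; wc := xH; wbin := bin_swap _ _ _ _ _ _ binX |}.

Definition step_prop (s s' : stage) (ep : Hom (Wo s') (H (Wo s))) : Prop :=
  e ∘ wm s' = in1 ∘ (Fmor H (wm s) ∘ ep) /\
  (forall Q (f : Hom Q X) (g : Hom Q (H (Wo s))),
     e ∘ f = in1 ∘ (Fmor H (wm s) ∘ g) -> exists u, wm s' ∘ u = f).

Lemma step_ex (s : stage) :
  exists t : {s' : stage & Hom (Wo s') (H (Wo s))}, step_prop s (projT1 t) (projT2 t).
Proof.
  assert (HHb := pres_bin C H HP _ _ _ _ _ (wbin s)).
  destruct (pb_bin C HU _ _ _ _ _ HHb XH fH) as [V [V' [rV [rV' [qV [qV' [[EV HVu] [_ HbV]]]]]]]].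
  destruct (compose_inj C HCC _ _ _ _ _ _ _ _ _ binX HbV) as [Q [c Hc]].
  exists (existT _ {| Wo := V; wm := xH ∘ qV; Wc := Q; wc := c; wbin := Hc |} rV).
  unfold step_prop; cbn [projT1 projT2 wm Wo]. destruct pbH as [EH HHu]. split.
  - rewrite (comp_assoc _ _ _ _ _ e), <- EH, <- comp_assoc, <- EV. reflexivity.
  - intros Q0 f g Efg.
    destruct (HHu Q0 (Fmor H (wm s) ∘ g) f (eq_sym Efg)) as [u1 [[Eu1 Eu2] _]].
    destruct (HVu Q0 g u1 (eq_sym Eu1)) as [u2 [[Ev1 Ev2] _]].
    exists u2. rewrite <- comp_assoc, Ev2. exact Eu2.
Qed.

Definition step (s : stage) := constructive_indefinite_description _ (step_ex s).
Fixpoint sq (n : nat) : stage :=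
  match n with 0 => stage0 | S n => projT1 (proj1_sig (step (sq n))) end.
Definition eps (n : nat) : Hom (Wo (sq (S n))) (H (Wo (sq n))) := projT2 (proj1_sig (step (sq n))).
Lemma eps_prop n : step_prop (sq n) (sq (S n)) (eps n).
Proof. exact (proj2_sig (step (sq n))). Qed.

Lemma in1_monic : monic C in1.
Proof. exact (monic_bin1 C HD _ _ _ _ _ Hbin). Qed.

Lemma Disj : forall m k, m <> k -> forall Q (f : Hom Q (Wo (sq m))) (g : Hom Q (Wo (sq k))),
  wm (sq m) ∘ f = wm (sq k) ∘ g -> is_initial C Q.
Proof.
  induction m as [|m IH]; intros [|k] Hmk Q f g E.
  - contradiction.
  - destruct (eps_prop k) as [Ek _]. destruct pb0 as [E0 _]. change (wm (sq 0)) with w0 in E.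
    apply (disjoint_bin C HU HD _ _ _ _ _ Hbin Q (Fmor H (wm (sq k)) ∘ (eps k ∘ g)) (eps0 ∘ f)).
    rewrite !comp_assoc in Ek. rewrite !comp_assoc, <- Ek, E0. rewrite <- !comp_assoc. f_equal. symmetry. exact E.
  - destruct (eps_prop m) as [Em _]. destruct pb0 as [E0 _]. change (wm (sq 0)) with w0 in E.
    apply (disjoint_bin C HU HD _ _ _ _ _ Hbin Q (Fmor H (wm (sq m)) ∘ (eps m ∘ f)) (eps0 ∘ g)).
    rewrite !comp_assoc in Em. rewrite !comp_assoc, <- Em, E0, <- !comp_assoc. f_equal. exact E.
  - destruct (eps_prop k) as [Ek _]. destruct (eps_prop m) as [Em _].
    assert (E' : Fmor H (wm (sq m)) ∘ (eps m ∘ f) = Fmor H (wm (sq k)) ∘ (eps k ∘ g)).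
    { apply in1_monic. rewrite !comp_assoc in Ek, Em. rewrite !comp_assoc, <- Ek, <- Em, <- !comp_assoc, E. reflexivity. }
    destruct (factor_compl C HU HD _ _ _ _ _ (wbin (sq k)) _ (wm (sq m))
      (IH k ltac:(congruence))) as [t Et].
    apply (disjoint_bin C HU HD _ _ _ _ _ (pres_bin C H HP _ _ _ _ _ (wbin (sq k))) Q
       (eps k ∘ g) (Fmor H t ∘ (eps m ∘ f))).
    rewrite <- E', Et, Fmor_comp, <- comp_assoc. reflexivity.
Qed.

Fixpoint sol (n : nat) : Hom (Wo (sq n)) A :=
  match n return Hom (Wo (sq n)) A with
  | 0 => eps0
  | S n => a ∘ (Fmor H (sol n) ∘ eps n)
  end.

Lemma L0 (k : Hom So A) : k ∘ in2 = idm A -> (k ∘ e) ∘ wm (sq 0) = sol 0.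
Proof. intros Ek. destruct pb0 as [E0 _]. simpl.
  rewrite <- comp_assoc, <- E0, comp_assoc, Ek, comp_id_l. reflexivity. Qed.

Lemma LS (k : Hom So A) (s : Hom X A) m : k ∘ in1 = a ∘ Fmor H s ->
  s ∘ wm (sq m) = sol m -> (k ∘ e) ∘ wm (sq (S m)) = sol (S m).
Proof. intros Ek Es. destruct (eps_prop m) as [Em _]. change (sol (S m)) with (a ∘ (Fmor H (sol m) ∘ eps m)).
  rewrite <- comp_assoc. rewrite Em, comp_assoc, Ek, <- !comp_assoc, (comp_assoc _ _ _ _ _ (Fmor H s)),
    <- Fmor_comp, Es. reflexivity. Qed.

Lemma main_sol (Hcor : corecursive H a) : exists! s : Hom X A, exists k : Hom So A,
  k ∘ in1 = a ∘ Fmor H s /\ k ∘ in2 = idm A /\ s = k ∘ e.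
Proof.
  destruct (HCC nat countable_nat (fun n => Wo (sq n))) as [SW [sig Hsig]].
  destruct (Hsig X (fun n => wm (sq n))) as [h [Eh _]].
  assert (Hinj : coproduct_injection C h).
  { apply (HK nat countable_nat (fun n => Wo (sq n)) X (fun n => wm (sq n))
      (fun n => ex_intro _ (Wc (sq n)) (ex_intro _ (wc (sq n)) (wbin (sq n))))) with (S := SW) (sigma := sig);
      [|exact Hsig|exact Eh].
    intros i j Hij.
    destruct (HU bool countable_bool _ _ _ (bin_fam C _ _ _ _ _ (wbin (sq i))) _ (wm (sq j))) as [H1 _].
    destruct (H1 true) as [P [r [q Hpb]]]. exists P, r, q. split; [exact Hpb|].
    exact (Disj i j Hij P r q (proj1 Hpb)). }
  destruct Hinj as [Xi [xi HbXi]].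
  assert (DXi : forall n Q (f : Hom Q Xi) (g : Hom Q (Wo (sq n))), xi ∘ f = wm (sq n) ∘ g -> is_initial C Q).
  { intros n Q f g E. apply (disjoint_bin C HU HD _ _ _ _ _ HbXi Q (sig n ∘ g) f).
    rewrite comp_assoc, Eh. symmetry. exact E. }
  destruct (pb_bin C HU _ _ _ _ _ Hbin Xi (e ∘ xi)) as [P1 [P2 [r1 [r2 [q1 [q2 [[Ep1 _] [[Ep2 _] HbP]]]]]]]].
  assert (HI2 : is_initial C P2).
  { destruct pb0 as [_ U0]. destruct (U0 P2 r2 (xi ∘ q2)) as [u [[_ Eu] _]].
    { rewrite Ep2, comp_assoc. reflexivity. }
    apply (DXi 0 P2 q2 u). symmetry. exact Eu. }
  destruct (iso_of_init C _ _ _ _ _ (bin_swap C _ _ _ _ _ HbP) HI2) as [u1 Eu1].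
  set (f1 := r1 ∘ u1).
  assert (Ef1 : e ∘ xi = in1 ∘ f1).
  { unfold f1. rewrite comp_assoc, Ep1, <- comp_assoc, Eu1, comp_id_r. reflexivity. }
  assert (HbHX := pres_bin C H HP _ _ _ _ _ HbXi).
  destruct (pb_bin C HU _ _ _ _ _ HbHX Xi f1) as [R1 [R2 [rho1 [rho2 [p1 [p2 [[Er1 _] [[Er2 _] HbR]]]]]]]].
  assert (HR1 : is_initial C R1).
  { assert (HcH := HP nat countable_nat _ _ _ Hsig).
    destruct (pb_fam C HU countable_nat _ _ _ HcH R1 rho1) as [T [t [p [Hpbs HcT]]]].
    apply (cop_initial C _ _ _ HcT). intros n.
    destruct (eps_prop n) as [_ Un].
    destruct (Un (T n) (xi ∘ (p1 ∘ p n)) (t n)) as [u Eu].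
    { rewrite (comp_assoc _ _ _ _ _ e), Ef1, <- comp_assoc, (comp_assoc _ _ _ _ _ f1), <- Er1.
      rewrite <- comp_assoc, <- (proj1 (Hpbs n)). rewrite (comp_assoc _ _ _ _ _ (Fmor H h)), <- Fmor_comp, Eh. reflexivity. }
    apply (DXi (S n) (T n) (p1 ∘ p n) u). symmetry. exact Eu. }
  destruct (iso_of_init C _ _ _ _ _ HbR HR1) as [u2 Eu2].
  set (einf := rho2 ∘ u2).
  assert (Einf : e ∘ xi = in1 ∘ (Fmor H xi ∘ einf)).
  { unfold einf. rewrite (comp_assoc _ _ _ _ _ (Fmor H xi)), Er2, <- comp_assoc, Eu2, comp_id_r.
    exact Ef1. }
  assert (Gw : forall (s' : Hom X A) (k' : Hom So A), k' ∘ in1 = a ∘ Fmor H s' -> k' ∘ in2 = idm A ->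
     s' = k' ∘ e -> forall n, s' ∘ wm (sq n) = sol n).
  { intros s' k' Ek1 Ek2 Es n. induction n as [|n IH].
    - rewrite Es at 1. apply L0. exact Ek2.
    - rewrite Es at 1. apply (LS k' s'); assumption. }
  assert (Ginf : forall (s' : Hom X A) (k' : Hom So A), k' ∘ in1 = a ∘ Fmor H s' ->
     (k' ∘ e) ∘ xi = a ∘ (Fmor H (s' ∘ xi) ∘ einf)).
  { intros s' k' Ek1. rewrite <- comp_assoc, Einf, comp_assoc, Ek1, <- comp_assoc,
      (comp_assoc _ _ _ _ _ (Fmor H s')), <- Fmor_comp. reflexivity. }
  destruct (Hcor Xi einf) as [sinf [Esinf Uinf]].
  destruct (Hsig A sol) as [sS [EsS _]].
  destruct (HbXi A sS sinf) as [s [[Es1 Es2] _]].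
  destruct (Hbin A (a ∘ Fmor H s) (idm A)) as [k [[Ek1 Ek2] _]].
  assert (Esw : forall n, s ∘ wm (sq n) = sol n).
  { intros n. rewrite <- Eh, comp_assoc, Es1. apply EsS. }
  exists s. split.
  - exists k. split; [exact Ek1|]. split; [exact Ek2|].
    apply (bin_ext C _ _ _ _ _ HbXi).
    + apply (cop_ext C _ _ _ Hsig). intros n. rewrite <- !comp_assoc, !Eh, Esw, comp_assoc.
      destruct n as [|n].
      * symmetry. apply L0. exact Ek2.
      * symmetry. apply (LS k s); [exact Ek1|apply Esw].
    + rewrite (Ginf s k Ek1). rewrite Es2. exact Esinf.
  - intros s' [k' [Ek1' [Ek2' Es']]].
    apply (bin_ext C _ _ _ _ _ HbXi).
    + apply (cop_ext C _ _ _ Hsig). intros n. rewrite <- !comp_assoc, !Eh, Esw.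
      symmetry. exact (Gw s' k' Ek1' Ek2' Es' n).
    + rewrite Es2. apply Uinf. rewrite Es' at 1. apply Ginf. exact Ek1'.
Qed.

End Main.

Theorem mainTheorem4 (C : Category) (H : Functor C) :
  hyper_extensive C ->
  preserves_countable_coproducts C H ->
  has_terminal_coalgebra C H ->
  cia_functor C H /\
  (forall (A : C) (a : Hom (H A) A), corecursive H a <-> cia H a).
Proof.
  intros [HCC [HU [HD HK]]] HP _.
  assert (Hcf : cia_functor C H).
  { intros A a Hcor X S in1 in2 Hbin e.
    destruct (pb_bin C HU _ _ _ _ _ Hbin X e) as [P1 [P2 [r1 [r2 [q1 [q2 [Hp1 [Hp2 Hb]]]]]]]].
    exact (main_sol C H HCC HU HD HK HP A a X S in1 in2 Hbin e P1 P2 r1 r2 q1 q2 Hp1 Hp2 Hb Hcor). }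
  split; [exact Hcf|]. intros A a. split; [apply Hcf|].
  intros Hcia X e.
  destruct (bin_exists C HCC (H X) A) as [S [in1 [in2 Hbin]]].
  destruct (Hcia X S in1 in2 Hbin (comp in1 e)) as [s [[k [Ek1 [Ek2 Es]]] Hu]].
  exists s. split.
  - rewrite Es at 1. rewrite comp_assoc, Ek1, <- comp_assoc. reflexivity.
  - intros s' Es'. apply Hu.
    destruct (Hbin A (comp a (Fmor H s')) (idm A)) as [k' [[E1 E2] _]].
    exists k'. split; [exact E1|]. split; [exact E2|].
    rewrite comp_assoc, E1, <- comp_assoc. exact Es'.
Qed.
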